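(* Let $n\ge 2$ and let $A_1,\dots,A_{2^n}$ be the vertices $(\pm\tfrac12,\dots,\pm\tfrac12)$ of a cube in $\mathbb R^n$ centred at the origin $O$. Let $\Gamma$ be the sphere of radius $r>0$ centred at $O$, let $D=\{\tfrac{r}{\sqrt n}(\varepsilon_1,\dots,\varepsilon_n):\varepsilon_j\in\{1,-1\}\}$ (the points where the rays $OA_i$ meet $\Gamma$) and $E=\{\pm r\mathbf e_i:1\le i\le n\}$ (the points where the perpendiculars from $O$ to the facets of the cube meet $\Gamma$), where $\mathbf e_1,\dots,\mathbf e_n$ is the standard basis. Fix $h\ge0$ and put $H_n(M,\lambda)=\sum_{i=1}^{2^n}(|MA_i|^2+h)^{\lambda/2}$ for $M\in\Gamma$. Then: (1) If $\lambda<0$: the minimum of $H_n(\cdot,\lambda)$ on $\Gamma$ is attained precisely at the points of $E$, and, unless $h=0$ and $\Gamma$ is the circumscribed sphere of the cube (i.e. $r=\sqrt n/2$, in which case $H_n(\cdot,\lambda)$ is unbounded), the maximum is attained precisely at the points of $D$. (2) If $\lambda\in\{0,2,4,6\}$, $H_n(M,\lambda)$ is independent of $M\in\Gamma$; these are the only real $\lambda$ with this property. If $\lambda\in(0,2)\cup(4,6)$, the maximum is attained precisely at the points of $E$ and the minimum precisely at the points of $D$. If $\lambda\in(2,4)$, the minimum is attained precisely at the points of $E$ and the maximum precisely at the points of $D$. (3) If $\lambda>6$: the maximum is attained precisely at the points of $D$ and the minimum precisely at the points of $E$.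
   Context: $|MA|$ denotes Euclidean distance. *)

(* Defs.v *)
From Stdlib Require Import Reals Lra.
Open Scope R_scope.

(* Points of R^n are functions nat -> R; only coordinates 0..n-1 matter. *)

Fixpoint rsum (k : nat) (f : nat -> R) : R :=
  match k with
  | O => 0
  | S k' => rsum k' f + f k'
  end.

(* The i-th cube vertex A_i (i = 0 .. 2^n - 1): coordinate j is +1/2 if bit j
   of i is set, -1/2 otherwise.  This enumerates all (±1/2,...,±1/2). *)
Definition vert (i : nat) (j : nat) : R :=
  if Nat.testbit i j then / 2 else - / 2.

Definition dist2 (n : nat) (x y : nat -> R) : R :=
  rsum n (fun j => (x j - y j) ^ 2).

Definition on_sphere (n : nat) (r : R) (M : nat -> R) : Prop :=
  rsum n (fun j => M j ^ 2) = r ^ 2.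

(* real power x^y for x >= 0: Rpower for x > 0, and 0^y = 0 (y>0), 0^0 = 1.
   (0^y for y < 0 is excluded by the domain predicate below.) *)
Definition rpow (x y : R) : R :=
  if Rlt_dec 0 x then Rpower x y
  else if Rlt_dec 0 y then 0 else 1.

Definition Hn (n : nat) (h lam : R) (M : nat -> R) : R :=
  rsum (2 ^ n) (fun i => rpow (dist2 n M (vert i) + h) (lam / 2)).

(* M is in Gamma and H_n(M,lam) is a (finite) real number *)
Definition Hdom (n : nat) (r h lam : R) (M : nat -> R) : Prop :=
  on_sphere n r M /\
  (0 <= lam \/ forall i, (i < 2 ^ n)%nat -> 0 < dist2 n M (vert i) + h).

Definition is_min_at (n : nat) (r h lam : R) (M : nat -> R) : Prop :=
  Hdom n r h lam M /\ forall N, Hdom n r h lam N -> Hn n h lam M <= Hn n h lam N.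

Definition is_max_at (n : nat) (r h lam : R) (M : nat -> R) : Prop :=
  Hdom n r h lam M /\ forall N, Hdom n r h lam N -> Hn n h lam N <= Hn n h lam M.

Definition in_D (n : nat) (r : R) (M : nat -> R) : Prop :=
  forall j, (j < n)%nat -> M j = r / sqrt (INR n) \/ M j = - (r / sqrt (INR n)).

Definition in_E (n : nat) (r : R) (M : nat -> R) : Prop :=
  exists i, (i < n)%nat /\ exists s, (s = 1 \/ s = -1) /\
    forall j, (j < n)%nat -> M j = (if Nat.eqb j i then s * r else 0).

(* Main.v *)
Require Import Defs.
From Stdlib Require Import Reals Lra Lia List Permutation Classical Arith.
From Coquelicot Require Import Coquelicot.
Open Scope R_scope.


Fixpoint Sg (w : R -> R) (c : R) (l : list R) : R :=
  match l with nil => w c | x :: l' => Sg w (c - x) l' + Sg w (c + x) l' end.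

Fixpoint sumsq (l : list R) : R := match l with nil => 0 | x :: l' => x^2 + sumsq l' end.
Fixpoint sumabs (l : list R) : R := match l with nil => 0 | x :: l' => Rabs x + sumabs l' end.

Lemma sumsq_ge0 l : 0 <= sumsq l.
Proof. induction l; simpl; nra. Qed.
Lemma sumabs_ge0 l : 0 <= sumabs l.
Proof. induction l; simpl; try lra. pose proof (Rabs_pos a); lra. Qed.

Lemma S_ext w1 w2 c l : (forall t, w1 t = w2 t) -> Sg w1 c l = Sg w2 c l.
Proof. revert c; induction l; intros c H; simpl; auto. rewrite !IHl; auto. Qed.

Lemma S_perm w c l l' : Permutation l l' -> Sg w c l = Sg w c l'.
Proof.
  intros HP; revert c; induction HP; intros c; simpl; auto.
  - rewrite !IHHP; auto.
  - replace (c - y - x) with (c - x - y) by ring.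
    replace (c - y + x) with (c + x - y) by ring.
    replace (c + y - x) with (c - x + y) by ring.
    replace (c + y + x) with (c + x + y) by ring. lra.
  - rewrite IHHP1, IHHP2; auto.
Qed.

Lemma S_neg w c x l : Sg w c ((-x) :: l) = Sg w c (x :: l).
Proof. simpl. replace (c - - x) with (c + x) by ring. replace (c + - x) with (c - x) by ring. lra. Qed.

Lemma S_abs w c x l : Sg w c (Rabs x :: l) = Sg w c (x :: l).
Proof. unfold Rabs; destruct (Rcase_abs x). apply S_neg. auto. Qed.

Lemma sumsq_perm l l' : Permutation l l' -> sumsq l = sumsq l'.
Proof. intros HP; induction HP; simpl; lra. Qed.
Lemma sumabs_perm l l' : Permutation l l' -> sumabs l = sumabs l'.
Proof. intros HP; induction HP; simpl; lra. Qed.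

Lemma S_shift w a c l : Sg (fun t => w (t + a)) c l = Sg w (c + a) l.
Proof.
  revert c; induction l; intros c; simpl; auto.
  rewrite !IHl. replace (c - a0 + a) with (c + a - a0) by ring.
  replace (c + a0 + a) with (c + a + a0) by ring. auto.
Qed.

Lemma S_plus f g c l : Sg (fun t => f t + g t) c l = Sg f c l + Sg g c l.
Proof. revert c; induction l; intros c; simpl; auto. rewrite !IHl; lra. Qed.

Lemma S_opp f c l : Sg (fun t => - f t) c l = - Sg f c l.
Proof. revert c; induction l; intros c; simpl; auto. rewrite !IHl; lra. Qed.

Definition Phi (w : R -> R) (x y t : R) := w (t - x - y) + w (t - x + y) + w (t + x - y) + w (t + x + y).

Lemma S_pair w c x y l : Sg w c (x :: y :: l) = Sg (Phi w x y) c l.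
Proof.
  revert c; induction l as [|z l IH]; intros c.
  - unfold Phi; simpl; lra.
  - rewrite (S_perm w c (x :: y :: z :: l) (z :: x :: y :: l)).
    + change (Sg w c (z :: x :: y :: l)) with (Sg w (c - z) (x :: y :: l) + Sg w (c + z) (x :: y :: l)).
      rewrite !IH. reflexivity.
    + eapply perm_trans. apply perm_skip. apply perm_swap. apply perm_swap.
Qed.

Lemma S_le f g c l : (forall t, c - sumabs l <= t -> f t <= g t) -> Sg f c l <= Sg g c l.
Proof.
  revert c; induction l as [|x l IH]; intros c H; simpl in *.
  - apply H; lra.
  - pose proof (Rle_abs x); pose proof (Rle_abs (-x)); rewrite Rabs_Ropp in *.
    apply Rplus_le_compat; apply IH; intros t Ht; apply H; lra.
Qed.

Lemma S_lt f g c l : (forall t, c - sumabs l <= t -> f t < g t) -> Sg f c l < Sg g c l.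
Proof.
  revert c; induction l as [|x l IH]; intros c H; simpl in *.
  - apply H; lra.
  - pose proof (Rle_abs x); pose proof (Rle_abs (-x)); rewrite Rabs_Ropp in *.
    apply Rplus_lt_compat; apply IH; intros t Ht; apply H; lra.
Qed.

Lemma S_eq_on f g c l : (forall t, c - sumabs l <= t -> f t = g t) -> Sg f c l = Sg g c l.
Proof.
  intros H; apply Rle_antisym; apply S_le; intros t Ht; rewrite H; auto; lra.
Qed.

Lemma S_nonneg g c l : (forall t, 0 <= g t) -> 0 <= Sg g c l.
Proof. revert c; induction l; intros c H; simpl; auto. pose proof (IHl (c-a) H); pose proof (IHl (c+a) H); lra. Qed.

Lemma S_ge_min g c l : (forall t, 0 <= g t) -> g (c - sumabs l) <= Sg g c l.
Proof.
  revert c; induction l as [|x l IH]; intros c H; simpl.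
  - right; f_equal; ring.
  - pose proof (S_nonneg g (c-x) l H); pose proof (S_nonneg g (c+x) l H).
    unfold Rabs; destruct (Rcase_abs x).
    + pose proof (IH (c + x) H). replace (c - (- x + sumabs l)) with (c + x - sumabs l) by ring. lra.
    + pose proof (IH (c - x) H). replace (c - (x + sumabs l)) with (c - x - sumabs l) by ring. lra.
Qed.

Lemma sq_abs a : a^2 = Rabs a ^2.
Proof. unfold Rabs; destruct (Rcase_abs a); ring. Qed.

Lemma sqrt_sumsq_le l : sqrt (sumsq l) <= sumabs l.
Proof.
  assert (H : sumsq l <= sumabs l ^ 2).
  { induction l; simpl; try lra. pose proof (sumabs_ge0 l). pose proof (Rabs_pos a).
    assert (a^2 = Rabs a ^2) by (apply sq_abs). nra. }
  rewrite <- (sqrt_pow2 (sumabs l)) by apply sumabs_ge0.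
  apply sqrt_le_1; auto. apply sumsq_ge0. apply pow2_ge_0.
Qed.

Lemma CS_list l : sumabs l ^ 2 <= INR (length l) * sumsq l.
Proof.
  induction l as [|a l IH]; cbn [length sumabs sumsq]; try (simpl; lra).
  rewrite S_INR. pose proof (sumabs_ge0 l). pose proof (sumsq_ge0 l). pose proof (pos_INR (length l)).
  assert (Ha : a^2 = Rabs a ^2) by (apply sq_abs).
  set (m := INR (length l)) in *. set (A := Rabs a). set (s := sumabs l) in *. set (q := sumsq l) in *.
  assert (0 <= A) by apply Rabs_pos.
  rewrite Ha. fold A.
  assert (2 * A * s <= m * A^2 + q).
  { destruct (Req_dec m 0) as [Hm|Hm].
    - rewrite Hm in IH. assert (s = 0) by nra. subst s; nra.
    - assert (0 < m) by lra.
      assert (0 <= (m*A - s)^2) by apply pow2_ge_0.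
      assert (m * (2*A*s) <= m * (m*A^2+q)) by nra.
      apply Rmult_le_reg_l with m; auto. }
  nra.
Qed.


Lemma dplus f g x a b : is_derive f x a -> is_derive g x b -> is_derive (fun y => f y + g y) x (a+b).
Proof. intros H1 H2; exact (is_derive_plus _ _ _ _ _ H1 H2). Qed.
Lemma dminus f g x a b : is_derive f x a -> is_derive g x b -> is_derive (fun y => f y - g y) x (a-b).
Proof. intros H1 H2; exact (is_derive_minus _ _ _ _ _ H1 H2). Qed.
Lemma dmult f g x a b : is_derive f x a -> is_derive g x b -> is_derive (fun y => f y * g y) x (a * g x + f x * b).
Proof. intros H1 H2; exact (is_derive_mult _ _ _ _ _ H1 H2 Rmult_comm). Qed.
Lemma dlin f D s x df : is_derive f (D + s * x) df -> is_derive (fun y => f (D + s * y)) x (s * df).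
Proof.
  intros H. assert (Hg : @is_derive R_AbsRing R_NormedModule (fun y : R => D + s * y) x s).
  { auto_derive; auto; ring. }
  exact (is_derive_comp f (fun y => D + s * y) x df s H Hg).
Qed.
Lemma dval (f : R -> R) (x a b : R) : is_derive f x a -> a = b -> is_derive f x b.
Proof. intros H ->; auto. Qed.
Lemma dext (f g : R -> R) (x a : R) : (forall y, f y = g y) -> is_derive f x a -> is_derive g x a.
Proof. intros H1 H2. apply is_derive_ext with f; auto. Qed.

Lemma dsub (f : R -> R) D x df : is_derive f (D - x) df -> is_derive (fun y => f (D - y)) x (- df).
Proof.
  intros H. apply is_derive_ext with (fun y => f (D + -1 * y)). intros; f_equal; ring.
  replace (- df) with (-1 * df) by ring. apply dlin. replace (D + -1 * x) with (D - x) by ring; auto.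
Qed.
Lemma dadd (f : R -> R) D x df : is_derive f (D + x) df -> is_derive (fun y => f (D + y)) x df.
Proof.
  intros H. apply is_derive_ext with (fun y => f (D + 1 * y)). intros; f_equal; ring.
  eapply dval. apply dlin. replace (D + 1 * x) with (D + x) by ring; eauto. ring.
Qed.
Lemma der_cont (f : R -> R) (x a : R) : is_derive f x a -> continuity_pt f x.
Proof.
  intros H. apply is_derive_Reals in H. apply derivable_continuous_pt. exists a; exact H.
Qed.

Lemma incr_MVT f df a b : a < b -> (forall x, a < x < b -> is_derive f x (df x)) ->
  (forall x, a <= x <= b -> continuity_pt f x) -> (forall x, a < x < b -> 0 < df x) -> f a < f b.
Proof.
  intros Hab Hd Hc Hp.
  set (df' := fun x => if Rlt_dec a x then if Rlt_dec x b then df x else 1 else 1).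
  destruct (MVT_gen f a b df') as [c [Hc1 Hc2]].
  - rewrite Rmin_left, Rmax_right by lra. intros x Hx. unfold df'.
    destruct (Rlt_dec a x); [|lra]. destruct (Rlt_dec x b); [|lra]. apply Hd; lra.
  - rewrite Rmin_left, Rmax_right by lra. auto.
  - assert (0 < df' c).
    { unfold df'. destruct (Rlt_dec a c); [|lra]. destruct (Rlt_dec c b); [|lra]. apply Hp; lra. }
    assert (0 < df' c * (b - a)) by (apply Rmult_lt_0_compat; lra). lra.
Qed.

Definition good (w : R -> R) := exists w1 w2 w3 : R -> R,
  (forall d, 0 < d -> is_derive w d (w1 d)) /\ (forall d, 0 < d -> is_derive w1 d (w2 d)) /\
  (forall d, 0 < d -> is_derive w2 d (w3 d)) /\ (forall a b, 0 < a -> a < b -> w3 a < w3 b).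


Lemma chi_pos (w1 w2 w3 : R -> R) (D u : R) :
  (forall d, 0 < d -> is_derive w1 d (w2 d)) ->
  (forall d, 0 < d -> is_derive w2 d (w3 d)) -> (forall a b, 0 < a -> a < b -> w3 a < w3 b) ->
  0 < u < D -> 0 < u * (w2 (D + u) + w2 (D - u)) - (w1 (D + u) - w1 (D - u)).
Proof.
  intros H1 H2 H3 Hu.
  set (chi := fun s => s * (w2 (D + 1 * s) + w2 (D + -1 * s)) - (w1 (D + 1 * s) - w1 (D + -1 * s))).
  assert (Hder : forall s, 0 <= s < D -> is_derive chi s (s * (w3 (D + s) - w3 (D - s)))).
  { intros s Hs. unfold chi. eapply dval.
    - apply dminus. apply dmult. apply is_derive_id. apply dplus; apply dlin.
      apply H2; lra. apply H2; lra.
      apply dminus; apply dlin. apply H1; lra. apply H1; lra.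
    - simpl. replace (D + 1 * s) with (D + s) by ring. replace (D + -1 * s) with (D - s) by ring.
      unfold one; simpl. ring. }
  assert (chi 0 < chi u).
  { apply incr_MVT with (df := fun s => s * (w3 (D + s) - w3 (D - s))).
    - lra.
    - intros; apply Hder; lra.
    - intros x Hx. eapply der_cont. apply Hder; lra.
    - intros x Hx. apply Rmult_lt_0_compat; try lra. assert (w3 (D - x) < w3 (D + x)) by (apply H3; lra). lra. }
  unfold chi in H. replace (D + 1 * u) with (D + u) in H by ring. replace (D + -1 * u) with (D - u) in H by ring.
  replace (D + 1 * 0) with D in H by ring. replace (D + -1 * 0) with D in H by ring. lra.
Qed.

Lemma K_incr (w1 w2 w3 : R -> R) (D a b : R) :
  (forall d, 0 < d -> is_derive w1 d (w2 d)) ->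
  (forall d, 0 < d -> is_derive w2 d (w3 d)) -> (forall a b, 0 < a -> a < b -> w3 a < w3 b) ->
  0 < a -> a < b -> b < D ->
  (w1 (D + a) - w1 (D - a)) / a < (w1 (D + b) - w1 (D - b)) / b.
Proof.
  intros H1 H2 H3 Ha Hab HbD.
  set (K := fun s => (w1 (D + 1 * s) - w1 (D + -1 * s)) * / s).
  assert (Hder : forall s, 0 < s < D -> is_derive K s
     ((s * (w2 (D + s) + w2 (D - s)) - (w1 (D + s) - w1 (D - s))) / s^2)).
  { intros s Hs. unfold K. eapply dval.
    - apply dmult. apply dminus; apply dlin. apply H1; lra. apply H1; lra.
      apply is_derive_inv. apply is_derive_id. simpl; lra.
    - simpl. replace (D + 1 * s) with (D + s) by ring. replace (D + -1 * s) with (D - s) by ring.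
      unfold one; simpl. field. lra. }
  assert (K a < K b).
  { apply incr_MVT with (df := fun s => (s * (w2 (D + s) + w2 (D - s)) - (w1 (D + s) - w1 (D - s))) / s^2).
    - lra.
    - intros; apply Hder; lra.
    - intros x Hx. eapply der_cont. apply Hder; lra.
    - intros x Hx. apply Rdiv_lt_0_compat. apply (chi_pos w1 w2 w3); auto; lra. apply pow_lt; lra. }
  unfold K in H. replace (D + 1 * a) with (D + a) in H by ring. replace (D + -1 * a) with (D - a) in H by ring.
  replace (D + 1 * b) with (D + b) in H by ring. replace (D + -1 * b) with (D - b) in H by ring. exact H.
Qed.

Definition phi (w : R -> R) D u := w (D - u) + w (D + u).
Definition Gf (w : R -> R) D rho p := phi w D p + phi w D (sqrt (2 * rho^2 - p^2)).

Lemma G_incr (w w1 w2 w3 : R -> R) (D rho p1 p2 : R) :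
  (forall d, 0 < d -> is_derive w d (w1 d)) ->
  (forall d, 0 < d -> is_derive w1 d (w2 d)) ->
  (forall d, 0 < d -> is_derive w2 d (w3 d)) -> (forall a b, 0 < a -> a < b -> w3 a < w3 b) ->
  0 <= rho -> rho <= p1 -> p1 < p2 -> p2^2 <= 2 * rho^2 -> p2 <= D ->
  (p2 < D \/ continuity_pt w 0) ->
  Gf w D rho p1 < Gf w D rho p2.
Proof.
  intros H0 H1 H2 H3 Hr Hp1 Hp12 Hp2 HD Hc.
  assert (Hw : forall d, 0 < d -> continuity_pt w d) by (intros d Hd; eapply der_cont; apply H0; auto).
  apply incr_MVT with (df := fun p =>
     (w1 (D + p) - w1 (D - p)) - p / sqrt (2 * rho^2 - p^2) *
        (w1 (D + sqrt (2 * rho^2 - p^2)) - w1 (D - sqrt (2 * rho^2 - p^2)))); auto.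
  - intros p Hp.
    assert (p^2 < p2^2) by nra.
    assert (rho^2 < p^2) by nra.
    assert (HQ : 0 < 2 * rho^2 - p^2) by nra.
    assert (HQ2 : sqrt (2 * rho^2 - p^2) < p).
    { apply Rlt_le_trans with (sqrt (p^2)); [apply sqrt_lt_1; nra | rewrite sqrt_pow2; lra]. }
    pose proof (sqrt_lt_R0 _ HQ).
    unfold Gf, phi. eapply dval.
    + apply dplus. apply dplus. apply dsub. apply H0; lra. apply dadd. apply H0; lra.
      apply dplus.
      * apply (is_derive_comp (fun q => w (D - q)) (fun p => sqrt (2 * rho^2 - p^2))).
        apply dsub. apply H0; lra.
        apply is_derive_sqrt. auto_derive; auto. auto.
      * apply (is_derive_comp (fun q => w (D + q)) (fun p => sqrt (2 * rho^2 - p^2))).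
        apply dadd. apply H0; lra.
        apply is_derive_sqrt. auto_derive; auto. auto.
    + simpl. unfold scal, one, mult; simpl. unfold mult; simpl. replace (2 * (rho * (rho * 1)) - p * (p * 1)) with (2*rho^2 - p^2) by ring. field. lra.
  - intros p Hp. unfold Gf, phi.
    assert (p^2 <= p2^2) by (apply pow_incr; lra).
    assert (rho^2 <= p^2) by (apply pow_incr; lra).
    assert (HQ : 0 <= 2 * rho^2 - p^2) by nra.
    assert (HQ2 : sqrt (2 * rho^2 - p^2) <= rho).
    { apply Rle_trans with (sqrt (rho^2)); [apply sqrt_le_1_alt; nra | rewrite sqrt_pow2; lra]. }
    assert (Hsq : continuity_pt (fun p => sqrt (2 * rho^2 - p^2)) p).
    { apply (continuity_pt_comp (fun p => 2 * rho^2 - p^2) sqrt).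
      apply derivable_continuous_pt. apply derivable_pt_minus. apply derivable_pt_const.
      apply derivable_pt_pow. apply continuity_pt_sqrt; auto. }
    pose proof (sqrt_pos (2 * rho^2 - p^2)).
    repeat apply continuity_pt_plus.
    + apply (continuity_pt_comp (fun p => D - p) w). 
      apply continuity_pt_minus. apply continuity_pt_const; intros a b; auto. apply derivable_continuous_pt, derivable_pt_id.
      destruct (Req_dec (D - p) 0) as [He|He].
      * destruct Hc as [Hc|Hc]; [lra|]. rewrite He; auto.
      * apply Hw; lra.
    + apply (continuity_pt_comp (fun p => D + p) w).
      apply continuity_pt_plus. apply continuity_pt_const; intros a b; auto. apply derivable_continuous_pt, derivable_pt_id.
      apply Hw; lra.
    + apply (continuity_pt_comp (fun p => D - sqrt (2 * rho^2 - p^2)) w).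
      apply continuity_pt_minus. apply continuity_pt_const; intros a b; auto. auto.
      apply Hw; lra.
    + apply (continuity_pt_comp (fun p => D + sqrt (2 * rho^2 - p^2)) w).
      apply continuity_pt_plus. apply continuity_pt_const; intros a b; auto. auto.
      apply Hw; lra.
  - intros p Hp.
    assert (p^2 < p2^2) by nra.
    assert (rho^2 < p^2) by nra.
    assert (HQ : 0 < 2 * rho^2 - p^2) by nra.
    assert (HQ2 : sqrt (2 * rho^2 - p^2) < p).
    { apply Rlt_le_trans with (sqrt (p^2)); [apply sqrt_lt_1; nra | rewrite sqrt_pow2; lra]. }
    pose proof (sqrt_lt_R0 _ HQ).
    set (q := sqrt (2 * rho^2 - p^2)) in *.
    pose proof (K_incr w1 w2 w3 D q p H1 H2 H3 H5 HQ2 ltac:(lra)) as HK.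
    assert (HK2 : p * ((w1 (D + q) - w1 (D - q)) / q) < p * ((w1 (D + p) - w1 (D - p)) / p))
      by (apply Rmult_lt_compat_l; lra).
    replace (p * ((w1 (D + p) - w1 (D - p)) / p)) with (w1 (D + p) - w1 (D - p)) in HK2 by (field; lra).
    replace (p * ((w1 (D + q) - w1 (D - q)) / q)) with (p / q * (w1 (D + q) - w1 (D - q))) in HK2 by (field; lra).
    lra.
Qed.


Lemma phi_abs w t u : phi w t (Rabs u) = phi w t u.
Proof. unfold phi, Rabs. destruct (Rcase_abs u); auto. replace (t - - u) with (t + u) by ring. replace (t + - u) with (t - u) by ring. lra. Qed.

Lemma Phi_G w x y t : Phi w x y t = Gf w t (sqrt (x^2 + y^2)) (Rabs x + Rabs y).
Proof.
  unfold Gf. rewrite pow2_sqrt by nra.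
  replace (2 * (x ^ 2 + y ^ 2) - (Rabs x + Rabs y) ^ 2) with (Rsqr (Rabs x - Rabs y))
    by (unfold Rsqr; rewrite (sq_abs x), (sq_abs y); ring).
  rewrite sqrt_Rsqr_abs, phi_abs.
  assert (E : Phi w x y t = phi w t (x + y) + phi w t (x - y)).
  { unfold Phi, phi. replace (t - x - y) with (t - (x+y)) by ring. replace (t + x + y) with (t + (x+y)) by ring.
    replace (t - x + y) with (t - (x-y)) by ring. replace (t + x - y) with (t + (x-y)) by ring. lra. }
  rewrite E. rewrite <- (phi_abs w t (x+y)), <- (phi_abs w t (x-y)).
  rewrite <- (phi_abs w t (Rabs x + Rabs y)), <- (phi_abs w t (Rabs x - Rabs y)).
  destruct (Rle_dec 0 x), (Rle_dec 0 y).
  - rewrite (Rabs_pos_eq x), (Rabs_pos_eq y) by lra. auto.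
  - rewrite (Rabs_pos_eq x), (Rabs_left1 y) by lra.
    replace (x + - y) with (x - y) by ring. replace (x - - y) with (x + y) by ring. lra.
  - rewrite (Rabs_left1 x), (Rabs_pos_eq y) by lra.
    replace (-x + y) with (-(x - y)) by ring. replace (-x - y) with (-(x + y)) by ring.
    rewrite !Rabs_Ropp. lra.
  - rewrite (Rabs_left1 x), (Rabs_left1 y) by lra.
    replace (-x + - y) with (-(x + y)) by ring. replace (-x - - y) with (-(x - y)) by ring.
    rewrite !Rabs_Ropp. lra.
Qed.

Lemma pair_lt w x y x' y' t : good w ->
  x^2 + y^2 = x'^2 + y'^2 -> Rabs (x * y) < Rabs (x' * y') ->
  0 <= t - Rabs x' - Rabs y' -> (0 < t - Rabs x' - Rabs y' \/ continuity_pt w 0) ->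
  Phi w x y t < Phi w x' y' t.
Proof.
  intros [w1 [w2 [w3 [H0 [H1 [H2 H3]]]]]] Hs Hxy Ht Hc.
  rewrite !Phi_G. rewrite <- Hs.
  rewrite !Rabs_mult in Hxy.
  pose proof (Rabs_pos x); pose proof (Rabs_pos y); pose proof (Rabs_pos x'); pose proof (Rabs_pos y').
  assert (E1 : (Rabs x + Rabs y)^2 = x^2 + y^2 + 2 * (Rabs x * Rabs y)) by (rewrite (sq_abs x), (sq_abs y); ring).
  assert (E2 : (Rabs x' + Rabs y')^2 = x'^2 + y'^2 + 2 * (Rabs x' * Rabs y')) by (rewrite (sq_abs x'), (sq_abs y'); ring).
  assert (Hlt : Rabs x + Rabs y < Rabs x' + Rabs y').
  { destruct (Rlt_le_dec (Rabs x + Rabs y) (Rabs x' + Rabs y')); auto.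
    assert ((Rabs x' + Rabs y')^2 <= (Rabs x + Rabs y)^2) by (apply pow_incr; lra). lra. }
  apply (G_incr w w1 w2 w3); auto.
  - apply sqrt_pos.
  - apply Rle_trans with (sqrt ((Rabs x + Rabs y)^2)).
    + apply sqrt_le_1_alt. rewrite E1. pose proof (Rmult_le_pos _ _ (Rabs_pos x) (Rabs_pos y)). lra.
    + rewrite sqrt_pow2; lra.
  - rewrite pow2_sqrt by nra. rewrite Hs, E2.
    rewrite (sq_abs x'), (sq_abs y'). pose proof (pow2_ge_0 (Rabs x' - Rabs y')). nra.
  - lra.
  - destruct Hc; [left; lra | right; auto].
Qed.


Fixpoint nz (l : list R) : nat :=
  match l with nil => 0%nat | x :: l' => ((if Req_EM_T x 0 then 0 else 1) + nz l')%nat end.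

Lemma sumabs_rep0 m : sumabs (repeat 0 m) = 0.
Proof. induction m; simpl; auto. rewrite IHm, Rabs_R0; ring. Qed.

Lemma sumsq0_nz l : sumsq l = 0 -> nz l = 0%nat.
Proof.
  induction l as [|x l IH]; simpl; intros H; auto.
  pose proof (sumsq_ge0 l). assert (x^2 = 0) by nra. assert (x = 0) by nra.
  destruct (Req_EM_T x 0); [|lra]. rewrite IH; auto; lra.
Qed.

Lemma minE w (Hg : good w) : forall rest x c,
  0 <= c - sumabs (x :: rest) -> (0 < c - sumabs (x :: rest) \/ continuity_pt w 0) ->
  Sg w c (sqrt (sumsq (x :: rest)) :: repeat 0 (length rest)) <= Sg w c (x :: rest) /\
  ((1 < nz (x :: rest))%nat -> Sg w c (sqrt (sumsq (x :: rest)) :: repeat 0 (length rest)) < Sg w c (x :: rest)).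
Proof.
  induction rest as [|y rest IH]; intros x c H1 H2.
  - change (sumsq (x :: nil)) with (x^2 + 0). replace (x^2+0) with (Rsqr x) by (unfold Rsqr; ring). rewrite sqrt_Rsqr_abs.
    simpl repeat. rewrite S_abs. split; [lra|]. simpl. destruct (Req_EM_T x 0); simpl; lia.
  - set (rho := sqrt (sumsq (y :: rest))).
    assert (Hrho : 0 <= rho) by apply sqrt_pos.
    assert (Hrho2 : rho <= sumabs (y :: rest)) by apply sqrt_sumsq_le.
    simpl sumabs in H1, H2, Hrho2.
    pose proof (Rle_abs x); pose proof (Rle_abs (-x)); rewrite Rabs_Ropp in *.
    destruct (IH y (c - x)) as [IA IB]. simpl sumabs; lra. simpl sumabs; destruct H2; [left; lra|right; auto].
    destruct (IH y (c + x)) as [IA' IB']. simpl sumabs; lra. simpl sumabs; destruct H2; [left; lra|right; auto].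
    fold rho in IA, IB, IA', IB'.
    set (zs := repeat 0 (length rest)) in *.
    assert (HA : Sg w c (x :: rho :: zs) <= Sg w c (x :: y :: rest)).
    { change (Sg w (c - x) (rho :: zs) + Sg w (c + x) (rho :: zs) <= Sg w (c - x) (y :: rest) + Sg w (c + x) (y :: rest)). lra. }
    assert (HR : sqrt (sumsq (x :: y :: rest)) = sqrt (x^2 + rho^2)).
    { unfold rho. rewrite pow2_sqrt by apply sumsq_ge0. reflexivity. }
    rewrite HR. change (repeat 0 (length (y :: rest))) with (0 :: zs).
    set (R0 := sqrt (x^2 + rho^2)).
    assert (HB : Sg w c (R0 :: 0 :: zs) <= Sg w c (x :: rho :: zs) /\ (x * rho <> 0 -> Sg w c (R0 :: 0 :: zs) < Sg w c (x :: rho :: zs))).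
    { assert (Hstrict : x * rho <> 0 -> Sg w c (R0 :: 0 :: zs) < Sg w c (x :: rho :: zs)).
      { intros Hne. rewrite !S_pair. apply S_lt. intros t Ht. unfold zs in Ht; rewrite sumabs_rep0 in Ht.
        apply pair_lt; auto.
        - unfold R0. rewrite pow2_sqrt; nra.
        - rewrite Rmult_0_r, Rabs_R0. apply Rabs_pos_lt; auto.
        - rewrite (Rabs_pos_eq rho); lra.
        - destruct H2; [left|right]; auto. rewrite (Rabs_pos_eq rho); lra. }
      split; auto.
      destruct (Req_dec (x * rho) 0) as [E|E]; [|left; auto].
      right. destruct (Rmult_integral _ _ E) as [Ex|Er].
      - subst x. unfold R0. replace (0^2 + rho^2) with (Rsqr rho) by (unfold Rsqr; ring).
        rewrite sqrt_Rsqr by auto. apply S_perm. apply perm_swap.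
      - unfold R0. rewrite Er. replace (x^2 + 0^2) with (Rsqr x) by (unfold Rsqr; ring).
        rewrite sqrt_Rsqr_abs. apply S_abs. }
    destruct HB as [HB1 HB2]. split; [lra|].
    intros Hnz.
    destruct (Nat.lt_ge_cases 1 (nz (y :: rest))) as [Hlt|Hge].
    + specialize (IB Hlt); specialize (IB' Hlt).
      assert (Sg w c (x :: rho :: zs) < Sg w c (x :: y :: rest)).
      { change (Sg w (c - x) (rho :: zs) + Sg w (c + x) (rho :: zs) < Sg w (c - x) (y :: rest) + Sg w (c + x) (y :: rest)). lra. }
      lra.
    + assert (Hx : x <> 0).
      { intro Ex. simpl nz in Hnz. destruct (Req_EM_T x 0); [|lra]. simpl in Hnz. simpl nz in Hge. lia. }
      assert (Hr : rho <> 0).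
      { intro Er. unfold rho in Er. apply sqrt_eq_0 in Er; [|apply sumsq_ge0].
        apply sumsq0_nz in Er. change (nz (x :: y :: rest)) with ((if Req_EM_T x 0 then 0 else 1) + nz (y :: rest))%nat in Hnz. rewrite Er in Hnz. destruct (Req_EM_T x 0); simpl in Hnz; lia. }
      assert (x * rho <> 0) by (apply Rmult_integral_contrapositive; auto).
      specialize (HB2 H3). lra.
Qed.


Lemma sumsq_lt_all l tau : l <> nil -> (forall x, In x l -> x^2 < tau^2) -> sumsq l < INR (length l) * tau^2.
Proof.
  induction l as [|a l IH]; intros Hn H; [congruence|].
  cbn [length sumsq]. rewrite S_INR.
  assert (a^2 < tau^2) by (apply H; left; auto).
  destruct l as [|b l].
  - simpl. lra.
  - assert (sumsq (b :: l) < INR (length (b :: l)) * tau^2) by (apply IH; [congruence| intros; apply H; right; auto]).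
    lra.
Qed.

Lemma sumsq_gt_all l tau : l <> nil -> (forall x, In x l -> tau^2 < x^2) -> INR (length l) * tau^2 < sumsq l.
Proof.
  induction l as [|a l IH]; intros Hn H; [congruence|].
  cbn [length sumsq]. rewrite S_INR.
  assert (tau^2 < a^2) by (apply H; left; auto).
  destruct l as [|b l].
  - simpl. lra.
  - assert (INR (length (b :: l)) * tau^2 < sumsq (b :: l)) by (apply IH; [congruence| intros; apply H; right; auto]).
    lra.
Qed.

Lemma perm_front (x : R) l : In x l -> exists l', Permutation l (x :: l').
Proof.
  intros Hin. destruct (in_split _ _ Hin) as [l1 [l2 E]]. subst.
  exists (l1 ++ l2). apply Permutation_sym, Permutation_middle.
Qed.

Lemma maxD w (Hg : good w) : forall m l c tau, length l = m -> sumsq l = INR m * tau^2 -> 0 <= tau ->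
  0 <= c - INR m * tau -> (0 < c - INR m * tau \/ continuity_pt w 0) ->
  Sg w c l <= Sg w c (repeat tau m) /\
  (~ List.Forall (fun x => Rabs x = tau) l -> Sg w c l < Sg w c (repeat tau m)).
Proof.
  induction m as [|m IH]; intros l c tau Hl Hs Ht H1 H2.
  - destruct l; [|simpl in Hl; lia]. split; [simpl; lra|]. intros Hf; exfalso; apply Hf; constructor.
  - rewrite S_INR in *.
    destruct (classic (exists x, In x l /\ Rabs x = tau)) as [[x [Hin Hx]] | Hno].
    + destruct (perm_front x l Hin) as [l' Hp].
      assert (Hl' : length l' = m) by (apply Permutation_length in Hp; simpl in Hp; lia).
      assert (Hx2 : x^2 = tau^2) by (rewrite sq_abs, Hx; auto).
      assert (Hs' : sumsq l' = INR m * tau^2) by (rewrite (sumsq_perm _ _ Hp) in Hs; simpl in Hs; lra).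
      destruct (IH l' (c - tau) tau Hl' Hs' Ht) as [A1 A2]. lra. destruct H2; [left; lra|right; auto].
      destruct (IH l' (c + tau) tau Hl' Hs' Ht) as [B1 B2]. lra. destruct H2; [left; lra|right; auto].
      rewrite (S_perm w c _ _ Hp), <- S_abs, Hx.
      change (Sg w (c - tau) l' + Sg w (c + tau) l' <= Sg w (c - tau) (repeat tau m) + Sg w (c + tau) (repeat tau m) /\
        (~ List.Forall (fun x => Rabs x = tau) l -> Sg w (c - tau) l' + Sg w (c + tau) l' < Sg w (c - tau) (repeat tau m) + Sg w (c + tau) (repeat tau m))).
      split; [lra|]. intros Hf.
      assert (~ List.Forall (fun x => Rabs x = tau) l').
      { intro HF. apply Hf. apply (Permutation_Forall (Permutation_sym Hp)). constructor; auto. }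
      specialize (A2 H); specialize (B2 H). lra.
    + assert (Hne : l <> nil) by (intro E; subst; simpl in Hl; lia).
      assert (Hno' : forall x, In x l -> x^2 <> tau^2).
      { intros x Hx E. apply Hno. exists x; split; auto. rewrite <- (Rabs_pos_eq tau) by auto.
        apply Rsqr_eq_abs_0. unfold Rsqr; nra. }
      assert (Hbig : exists x, In x l /\ tau^2 < x^2).
      { apply NNPP; intro HN. assert (sumsq l < INR (length l) * tau^2).
        { apply sumsq_lt_all; auto. intros x Hx. specialize (Hno' x Hx).
          destruct (Rtotal_order (x^2) (tau^2)) as [?|[?|?]]; auto; try congruence. exfalso; apply HN; eauto. }
        rewrite Hl, S_INR in H. lra. }
      assert (Hsmall : exists y, In y l /\ y^2 < tau^2).
      { apply NNPP; intro HN. assert (INR (length l) * tau^2 < sumsq l).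
        { apply sumsq_gt_all; auto. intros x Hx. specialize (Hno' x Hx).
          destruct (Rtotal_order (x^2) (tau^2)) as [?|[?|?]]; auto; try congruence. exfalso; apply HN; eauto. }
        rewrite Hl, S_INR in H. lra. }
      destruct Hbig as [x [Hxin Hx]]. destruct Hsmall as [y [Hyin Hy]].
      destruct (in_split _ _ Hxin) as [la [lb E]]. subst l.
      assert (Hyin' : In y (la ++ lb)).
      { destruct (in_elt_inv _ _ _ _ Hyin) as [E|E]; auto. subst; lra. }
      destruct (perm_front y _ Hyin') as [l2 Hp2].
      assert (Hp : Permutation (la ++ x :: lb) (x :: y :: l2)).
      { eapply perm_trans. apply Permutation_sym, Permutation_middle. apply perm_skip; auto. }
      assert (Hl2 : length l2 = (m - 1)%nat) by (apply Permutation_length in Hp; rewrite Hl in Hp; simpl in Hp; lia).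
      assert (Hm : (1 <= m)%nat) by (apply Permutation_length in Hp; rewrite Hl in Hp; simpl in Hp; lia).
      set (s := sqrt (x^2 + y^2 - tau^2)).
      assert (Hs0 : 0 <= x^2 + y^2 - tau^2) by (pose proof (pow2_ge_0 y); lra).
      assert (Hss : s^2 = x^2 + y^2 - tau^2) by (apply pow2_sqrt; auto).
      assert (Hspos : 0 <= s) by apply sqrt_pos.
      assert (HsumT : sumsq (x :: y :: l2) = (INR m + 1) * tau^2) by (rewrite <- (sumsq_perm _ _ Hp); auto).
      assert (Hl' : length (s :: l2) = m) by (simpl; lia).
      assert (Hs' : sumsq (s :: l2) = INR m * tau^2) by (simpl in HsumT |- *; lra).
      destruct (IH (s :: l2) (c - tau) tau Hl' Hs' Ht) as [A1 _]. lra. destruct H2; [left; lra|right; auto].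
      destruct (IH (s :: l2) (c + tau) tau Hl' Hs' Ht) as [B1 _]. lra. destruct H2; [left; lra|right; auto].
      assert (HCS : sumabs (tau :: s :: l2) <= (INR m + 1) * tau).
      { pose proof (CS_list (tau :: s :: l2)) as C.
        replace (INR (length (tau :: s :: l2))) with (INR m + 1) in C by (change (length (tau :: s :: l2)) with (Datatypes.S (length (s :: l2))); rewrite S_INR, Hl'; auto).
        replace (sumsq (tau :: s :: l2)) with ((INR m + 1) * tau^2) in C by (simpl in HsumT |- *; lra).
        pose proof (sumabs_ge0 (tau :: s :: l2)). pose proof (pos_INR m).
        apply Rle_trans with (sqrt (sumabs (tau :: s :: l2) ^ 2)).
        - rewrite sqrt_pow2; lra.
        - rewrite <- (sqrt_pow2 ((INR m + 1) * tau)) by nra. apply sqrt_le_1_alt. nra. }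
      simpl sumabs in HCS. rewrite (Rabs_pos_eq tau), (Rabs_pos_eq s) in HCS by auto.
      assert (Hlt : Sg w c (x :: y :: l2) < Sg w c (tau :: s :: l2)).
      { rewrite !S_pair. apply S_lt. intros t Htt. apply pair_lt; auto.
        - lra.
        - assert (0 < (x^2 - tau^2) * (tau^2 - y^2)) by (apply Rmult_lt_0_compat; lra).
          assert (Hsq : (x*y)^2 < (tau*s)^2) by (rewrite !Rpow_mult_distr, Hss; nra).
          rewrite (sq_abs (x*y)), (sq_abs (tau*s)) in Hsq.
          destruct (Rlt_le_dec (Rabs (x*y)) (Rabs (tau*s))); auto.
          pose proof (Rabs_pos (tau*s)). assert (Rabs (tau*s)^2 <= Rabs (x*y)^2) by (apply pow_incr; lra). lra.
        - rewrite (Rabs_pos_eq tau), (Rabs_pos_eq s) by auto. lra.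
        - destruct H2; [left|right]; auto. rewrite (Rabs_pos_eq tau), (Rabs_pos_eq s) by auto. lra. }
      rewrite (S_perm w c _ _ Hp).
      assert (Sg w c (tau :: s :: l2) <= Sg w c (repeat tau (Datatypes.S m))).
      { change (Sg w (c - tau) (s :: l2) + Sg w (c + tau) (s :: l2) <= Sg w (c - tau) (repeat tau m) + Sg w (c + tau) (repeat tau m)). lra. }
      split; intros; lra.
Qed.


Fixpoint lst (M : nat -> R) (n : nat) : list R :=
  match n with O => nil | Datatypes.S k => M k :: lst M k end.

Definition sgn (i j : nat) : R := if Nat.testbit i j then 1 else -1.

Lemma rsum_ext k f g : (forall j, (j < k)%nat -> f j = g j) -> rsum k f = rsum k g.
Proof. induction k; intros H; simpl; auto. rewrite IHk by (intros; apply H; lia). rewrite H by lia; auto. Qed.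

Lemma rsum_plus k f g : rsum k (fun j => f j + g j) = rsum k f + rsum k g.
Proof. induction k; simpl; try lra. Qed.
Lemma rsum_minus k f g : rsum k (fun j => f j - g j) = rsum k f - rsum k g.
Proof. induction k; simpl; try lra. Qed.
Lemma rsum_const k c : rsum k (fun _ => c) = INR k * c.
Proof. induction k; simpl rsum; [simpl; lra|]. rewrite IHk, S_INR; lra. Qed.
Lemma rsum_le k f g : (forall j, (j < k)%nat -> f j <= g j) -> rsum k f <= rsum k g.
Proof. induction k; intros H; simpl; try lra. pose proof (H k ltac:(lia)). pose proof (IHk ltac:(intros; apply H; lia)). lra. Qed.

Lemma rsum_add_range a b F : rsum (a + b) F = rsum a F + rsum b (fun i => F (a + i)%nat).
Proof. induction b; simpl. rewrite Nat.add_0_r; lra. rewrite Nat.add_succ_r. simpl. rewrite IHb; lra. Qed.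

Lemma testbit_low_false i n : (i < 2 ^ n)%nat -> Nat.testbit i n = false.
Proof.
  intros H. rewrite Nat.testbit_eqb. rewrite Nat.div_small by auto. reflexivity.
Qed.
Lemma testbit_high_true i n : (i < 2 ^ n)%nat -> Nat.testbit (2 ^ n + i) n = true.
Proof.
  intros H. rewrite Nat.testbit_eqb.
  replace (2 ^ n + i)%nat with (1 * 2 ^ n + i)%nat by lia.
  rewrite Nat.div_add_l by (apply Nat.pow_nonzero; lia). rewrite Nat.div_small by auto. reflexivity.
Qed.
Lemma testbit_high_low i n j : (i < 2 ^ n)%nat -> (j < n)%nat -> Nat.testbit (2 ^ n + i) j = Nat.testbit i j.
Proof.
  intros H Hj. rewrite <- (Nat.mod_pow2_bits_low _ n j Hj).
  replace (2 ^ n + i)%nat with (i + 1 * 2 ^ n)%nat by lia. rewrite Nat.Div0.mod_add.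
  rewrite Nat.mod_small by auto. reflexivity.
Qed.

Lemma bridge n M : forall g c,
  rsum (2 ^ n) (fun i => g (c - rsum n (fun j => sgn i j * M j))) = Sg g c (lst M n).
Proof.
  induction n as [|n IH]; intros g c.
  - simpl. rewrite Rplus_0_l, Rminus_0_r. reflexivity.
  - rewrite Nat.pow_succ_r'. replace (2 * 2 ^ n)%nat with (2 ^ n + 2 ^ n)%nat by lia.
    rewrite rsum_add_range.
    transitivity (Sg g (c - M n) (lst M n) + Sg g (c + M n) (lst M n)); [| reflexivity].
    rewrite <- !IH.
    rewrite (rsum_ext (2 ^ n) _ (fun i => g (c + M n - rsum n (fun j => sgn i j * M j)))).
    rewrite (rsum_ext (2 ^ n) (fun i => g (c - rsum (Datatypes.S n) (fun j => sgn (2 ^ n + i) j * M j)))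
       (fun i => g (c - M n - rsum n (fun j => sgn i j * M j)))).
    + lra.
    + intros i Hi. f_equal. simpl rsum. unfold sgn at 2. rewrite testbit_high_true by auto.
      rewrite (rsum_ext n _ (fun j => sgn i j * M j)). ring.
      intros j Hj. unfold sgn. rewrite testbit_high_low by auto. auto.
    + intros i Hi. f_equal. simpl rsum. unfold sgn at 2. rewrite testbit_low_false by auto. ring.
Qed.

Lemma vert_sgn i j : vert i j = sgn i j / 2.
Proof. unfold vert, sgn. destruct (Nat.testbit i j); field. Qed.

Lemma dist2_eq n M i : dist2 n M (vert i) = rsum n (fun j => M j ^ 2) + INR n / 4 - rsum n (fun j => sgn i j * M j).
Proof.
  unfold dist2. rewrite (rsum_ext n _ (fun j => (M j ^ 2 + / 4) - sgn i j * M j)).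
  - rewrite rsum_minus, rsum_plus, rsum_const. lra.
  - intros j _. rewrite vert_sgn. unfold sgn. destruct (Nat.testbit i j); field.
Qed.

Definition aa n r h := r ^ 2 + INR n / 4 + h.

Lemma Hn_bridge n h lam M : Hn n h lam M = Sg (fun t => rpow t (lam / 2)) (rsum n (fun j => M j ^ 2) + INR n / 4 + h) (lst M n).
Proof.
  unfold Hn. rewrite <- bridge. apply rsum_ext. intros i _. f_equal. rewrite dist2_eq. ring.
Qed.

Lemma lst_length M n : length (lst M n) = n.
Proof. induction n; simpl; auto. Qed.
Lemma lst_sumsq M n : sumsq (lst M n) = rsum n (fun j => M j ^ 2).
Proof. induction n; simpl; auto. simpl in IHn. rewrite IHn; ring. Qed.
Lemma lst_sumabs M n : sumabs (lst M n) = rsum n (fun j => Rabs (M j)).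
Proof. induction n; simpl; auto. rewrite IHn; ring. Qed.

Lemma sgn_abs i j x : sgn i j * x <= Rabs x.
Proof. unfold sgn. destruct (Nat.testbit i j). rewrite Rmult_1_l; apply Rle_abs.
  pose proof (Rle_abs (-x)); rewrite Rabs_Ropp in H; lra. Qed.

Lemma dom_pos_iff n h M : (forall i, (i < 2 ^ n)%nat -> 0 < dist2 n M (vert i) + h) <->
  0 < rsum n (fun j => M j ^ 2) + INR n / 4 + h - sumabs (lst M n).
Proof.
  split.
  - intros H.
    set (g := fun t => if Rlt_dec 0 t then 0 else 1).
    assert (Hg : forall t, 0 <= g t) by (intros; unfold g; destruct Rlt_dec; lra).
    pose proof (S_ge_min g (rsum n (fun j => M j ^ 2) + INR n / 4 + h) (lst M n) Hg).
    rewrite <- bridge in H0.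
    rewrite (rsum_ext (2 ^ n) _ (fun _ => 0)) in H0.
    + rewrite rsum_const, Rmult_0_r in H0. unfold g in H0. destruct Rlt_dec; auto. lra.
    + intros i Hi. specialize (H i Hi). rewrite dist2_eq in H. unfold g. destruct Rlt_dec; auto. lra.
  - intros H i Hi. rewrite dist2_eq. rewrite lst_sumabs in H.
    pose proof (rsum_le n (fun j => sgn i j * M j) (fun j => Rabs (M j)) (fun j _ => sgn_abs i j (M j))).
    lra.
Qed.


Lemma rpow_pos_eq t k : 0 < t -> rpow t k = Rpower t k.
Proof. intros H; unfold rpow; destruct (Rlt_dec 0 t); auto; lra. Qed.

Lemma rpow_nonneg t k : 0 <= rpow t k.
Proof. unfold rpow. destruct (Rlt_dec 0 t). unfold Rpower; left; apply exp_pos. destruct (Rlt_dec 0 k); lra. Qed.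

Lemma rpow_gt0 t k : 0 < t -> 0 < rpow t k.
Proof. intros H; rewrite rpow_pos_eq by auto. unfold Rpower; apply exp_pos. Qed.

Lemma d_cpow c e d : 0 < d -> is_derive (fun t => c * Rpower t e) d (c * (e * Rpower d (e - 1))).
Proof. intros H. apply is_derive_scal. apply is_derive_Reals. apply derivable_pt_lim_power; auto. Qed.

Lemma d_rpow s k d : 0 < d -> is_derive (fun t => s * rpow t k) d (s * k * Rpower d (k - 1)).
Proof.
  intros H. apply is_derive_ext_loc with (fun t => s * Rpower t k).
  - exists (mkposreal d H). intros y Hy. unfold ball in Hy; simpl in Hy.
    unfold AbsRing_ball, abs, minus, plus, opp in Hy; simpl in Hy.
    apply Rabs_def2 in Hy. rewrite rpow_pos_eq; auto. lra.
  - eapply dval. apply d_cpow; auto. ring.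
Qed.

Lemma good_pow s k : 0 < s * (k * (k - 1) * (k - 2) * (k - 3)) -> good (fun t => s * rpow t k).
Proof.
  intros Hs.
  exists (fun d => s * k * Rpower d (k - 1)), (fun d => s * k * (k - 1) * Rpower d (k - 2)),
         (fun d => s * k * (k - 1) * (k - 2) * Rpower d (k - 3)).
  split; [|split; [|split]].
  - intros d Hd; apply d_rpow; auto.
  - intros d Hd. eapply dval. apply d_cpow; auto. replace (k - 1 - 1) with (k - 2) by ring. ring.
  - intros d Hd. eapply dval. apply d_cpow; auto. replace (k - 2 - 1) with (k - 3) by ring. ring.
  - intros a b Ha Hab. unfold Rpower.
    set (C := s * k * (k - 1) * (k - 2)).
    assert (HC : 0 < C * (k - 3)) by (unfold C; nra).
    pose proof (ln_increasing a b Ha Hab).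
    destruct (Rlt_le_dec 0 (k - 3)).
    + assert (0 < C) by nra.
      apply Rmult_lt_compat_l; auto. apply exp_increasing. nra.
    + assert (k - 3 < 0) by (destruct r; auto; subst; nra).
      assert (C < 0) by nra.
      assert (exp ((k - 3) * ln b) < exp ((k - 3) * ln a)) by (apply exp_increasing; nra).
      nra.
Qed.

Lemma cont0_pow s k : 0 < k -> continuity_pt (fun t => s * rpow t k) 0.
Proof.
  intros Hk.
  assert (H0 : rpow 0 k = 0) by (unfold rpow; destruct (Rlt_dec 0 0); [lra|]; destruct (Rlt_dec 0 k); lra).
  intros eps Heps. simpl in *.
  set (e2 := eps / (Rabs s + 1)).
  assert (He2 : 0 < e2) by (unfold e2; apply Rdiv_lt_0_compat; auto; pose proof (Rabs_pos s); lra).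
  exists (exp (ln e2 / k)). split; [apply exp_pos|].
  intros x [_ Hx]. unfold R_dist in *. rewrite H0, Rmult_0_r, Rminus_0_r.
  rewrite Rminus_0_r in Hx.
  destruct (Rlt_dec 0 x) as [Hxp|Hxn].
  - rewrite rpow_pos_eq by auto. rewrite Rabs_mult.
    assert (Hlt : Rpower x k < e2).
    { unfold Rpower. rewrite <- (exp_ln e2) by auto. apply exp_increasing.
      rewrite Rabs_pos_eq in Hx by lra.
      assert (ln x < ln e2 / k). { rewrite <- (ln_exp (ln e2 / k)). apply ln_increasing; auto. }
      apply Rmult_lt_reg_r with (/ k). apply Rinv_0_lt_compat; auto.
      replace (k * ln x * / k) with (ln x) by (field; lra). unfold Rdiv in H; lra. }
    assert (0 < Rpower x k) by (unfold Rpower; apply exp_pos).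
    rewrite (Rabs_pos_eq (Rpower x k)) by lra.
    pose proof (Rabs_pos s).
    apply Rle_lt_trans with ((Rabs s + 1) * Rpower x k). nra.
    replace eps with ((Rabs s + 1) * e2) by (unfold e2; field; lra).
    apply Rmult_lt_compat_l; lra.
  - unfold rpow. destruct (Rlt_dec 0 x); [lra|]. destruct (Rlt_dec 0 k); [|lra].
    rewrite Rmult_0_r, Rabs_R0. auto.
Qed.


Lemma rsum_single n i v : (i < n)%nat -> rsum n (fun j => if Nat.eqb j i then v else 0) = v.
Proof.
  induction n; intros H; [lia|]. simpl rsum.
  destruct (Nat.eq_dec i n) as [->|Hne].
  - rewrite Nat.eqb_refl. rewrite (rsum_ext n _ (fun _ => 0)). rewrite rsum_const; ring.
    intros j Hj. destruct (Nat.eqb_spec j n); auto; lia.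
  - rewrite IHn by lia. destruct (Nat.eqb_spec n i); [lia|ring].
Qed.

Lemma lst_zero M m : (forall j, (j < m)%nat -> M j = 0) -> lst M m = repeat 0 m.
Proof. induction m; intros H; simpl; auto. rewrite H, IHm; auto; intros; apply H; lia. Qed.

Lemma lst_perm_single n M i : (i < n)%nat -> (forall j, (j < n)%nat -> j <> i -> M j = 0) ->
  Permutation (lst M n) (M i :: repeat 0 (n - 1)).
Proof.
  induction n; intros Hi H; [lia|].
  simpl lst. destruct (Nat.eq_dec i n) as [->|Hne].
  - rewrite lst_zero. replace (Datatypes.S n - 1)%nat with n by lia. apply Permutation_refl.
    intros j Hj; apply H; lia.
  - rewrite (H n) by lia.
    eapply perm_trans. apply perm_skip. apply IHn. lia. intros; apply H; lia.
    replace (Datatypes.S n - 1)%nat with (Datatypes.S (n - 1)) by lia. simpl. apply perm_swap.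
Qed.

Lemma Sg_forall_abs w c tau l : List.Forall (fun x => Rabs x = tau) l -> Sg w c l = Sg w c (repeat tau (length l)).
Proof.
  intros HF; revert c; induction HF; intros c; simpl; auto.
  rewrite <- H. change (Sg w (c - x) l + Sg w (c + x) l = Sg w c (Rabs x :: repeat (Rabs x) (length l))).
  rewrite S_abs. simpl. rewrite !IHHF. rewrite H; auto.
Qed.

Lemma Forall_lst M n tau : List.Forall (fun x => Rabs x = tau) (lst M n) <-> (forall j, (j < n)%nat -> Rabs (M j) = tau).
Proof.
  induction n; simpl; split; intros H.
  - intros; lia.
  - constructor.
  - inversion H; subst. intros j Hj. destruct (Nat.eq_dec j n) as [->|]; auto. apply IHn; auto; lia.
  - constructor. apply H; lia. apply IHn. intros; apply H; lia.
Qed.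

Lemma nz_lst0 M n : nz (lst M n) = 0%nat -> forall j, (j < n)%nat -> M j = 0.
Proof.
  induction n; intros H j Hj; [lia|]. simpl in H.
  destruct (Req_EM_T (M n) 0); [|lia]. simpl in H.
  destruct (Nat.eq_dec j n) as [->|]; auto. apply IHn; auto; lia.
Qed.

Lemma nz_lst1 M n : (nz (lst M n) <= 1)%nat -> forall i j, (i < n)%nat -> (j < n)%nat -> M i <> 0 -> M j <> 0 -> i = j.
Proof.
  induction n; intros H i j Hi Hj Mi Mj; [lia|]. simpl in H.
  destruct (Req_EM_T (M n) 0) as [E|E].
  - simpl in H. destruct (Nat.eq_dec i n); [subst; congruence|]. destruct (Nat.eq_dec j n); [subst; congruence|].
    apply IHn; auto; lia.
  - assert (nz (lst M n) = 0%nat) by lia. pose proof (nz_lst0 M n H0).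
    destruct (Nat.eq_dec i n); destruct (Nat.eq_dec j n); try lia.
    + exfalso; apply Mj; apply H1; lia.
    + exfalso; apply Mi; apply H1; lia.
    + exfalso; apply Mi; apply H1; lia.
Qed.

Lemma Sg_scal s f c l : Sg (fun t => s * f t) c l = s * Sg f c l.
Proof. revert c; induction l; intros c; simpl; auto. rewrite !IHl; ring. Qed.

Lemma sphere_sumabs n r M : 0 < r -> on_sphere n r M -> sumabs (lst M n) <= r * sqrt (INR n).
Proof.
  intros Hr H. unfold on_sphere in H.
  pose proof (CS_list (lst M n)). rewrite lst_length, lst_sumsq, H in H0.
  pose proof (sumabs_ge0 (lst M n)). pose proof (sqrt_pos (INR n)).
  apply Rle_trans with (sqrt (sumabs (lst M n) ^ 2)). rewrite sqrt_pow2; lra.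
  rewrite <- (sqrt_pow2 (r * sqrt (INR n))) by nra. apply sqrt_le_1_alt.
  rewrite Rpow_mult_distr, pow2_sqrt by apply pos_INR. lra.
Qed.

Lemma aa_bound n r h : 0 <= h -> r ^ 2 + INR n / 4 + h - r * sqrt (INR n) = (r - sqrt (INR n) / 2) ^ 2 + h.
Proof.
  intros. pose proof (pow2_sqrt (INR n) (pos_INR n)). nra.
Qed.


Lemma e0_E n r : (1 <= n)%nat -> in_E n r (fun j => if Nat.eqb j 0 then r else 0).
Proof. intros Hn. exists 0%nat. split; [lia|]. exists 1. split; [left; auto|]. intros j Hj.
  destruct (Nat.eqb j 0); ring. Qed.

Lemma E_props n r M : 0 < r -> in_E n r M ->
  on_sphere n r M /\ sumabs (lst M n) = r /\ (forall w c, Sg w c (lst M n) = Sg w c (r :: repeat 0 (n - 1))).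
Proof.
  intros Hr [i [Hi [s [Hs HM]]]].
  assert (Hs2 : s ^ 2 = 1) by (destruct Hs; subst; ring).
  assert (Hsa : Rabs s = 1) by (destruct Hs; subst; unfold Rabs; destruct Rcase_abs; lra).
  split; [|split].
  - unfold on_sphere. rewrite (rsum_ext n _ (fun j => if Nat.eqb j i then (s * r) ^ 2 else 0)).
    rewrite rsum_single by auto. rewrite Rpow_mult_distr, Hs2; ring.
    intros j Hj. rewrite HM by auto. destruct (Nat.eqb j i); ring.
  - rewrite lst_sumabs. rewrite (rsum_ext n _ (fun j => if Nat.eqb j i then Rabs (s * r) else 0)).
    rewrite rsum_single by auto. rewrite Rabs_mult, Hsa.
    rewrite Rabs_pos_eq; lra.
    intros j Hj. rewrite HM by auto. destruct (Nat.eqb j i); auto. apply Rabs_R0.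
  - intros w c. rewrite (S_perm w c _ _ (lst_perm_single n M i Hi ltac:(intros j Hj Hne; rewrite HM by auto;
      destruct (Nat.eqb_spec j i); [lia|auto]))).
    rewrite <- S_abs. rewrite HM by auto. rewrite Nat.eqb_refl, Rabs_mult, Hsa, Rabs_pos_eq by lra. rewrite Rmult_1_l. reflexivity.
Qed.

Lemma nz_E n r M : 0 < r -> on_sphere n r M -> (nz (lst M n) <= 1)%nat -> in_E n r M.
Proof.
  intros Hr Hs Hnz. unfold on_sphere in Hs.
  destruct (classic (exists i, (i < n)%nat /\ M i <> 0)) as [[i [Hi Mi]]|Hno].
  - pose proof (nz_lst1 M n Hnz) as U.
    assert (Hz : forall j, (j < n)%nat -> j <> i -> M j = 0).
    { intros j Hj Hne. destruct (Req_dec (M j) 0); auto. exfalso; apply Hne; apply (U j i); auto. }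
    assert (HMi : M i ^ 2 = r ^ 2).
    { rewrite <- Hs. rewrite (rsum_ext n _ (fun j => if Nat.eqb j i then M i ^ 2 else 0)).
      rewrite rsum_single; auto. intros j Hj. destruct (Nat.eqb_spec j i). subst; auto. rewrite Hz; auto. ring. }
    assert (Hcase : M i = r \/ M i = - r) by nra.
    exists i. split; auto. exists (M i / r). split.
    + destruct Hcase as [E|E]; rewrite E; [left|right]; field; lra.
    + intros j Hj. destruct (Nat.eqb_spec j i). subst; field; lra. apply Hz; auto.
  - exfalso. assert (rsum n (fun j => M j ^ 2) = 0).
    { rewrite (rsum_ext n _ (fun _ => 0)). rewrite rsum_const; ring.
      intros j Hj. destruct (Req_dec (M j) 0) as [E|E]. rewrite E; ring. exfalso; apply Hno; eauto. }
    assert (0 < r^2) by nra. lra.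
Qed.

Lemma GenMinE n r a (w : R -> R) (dom : (nat -> R) -> Prop) :
  (1 <= n)%nat -> 0 < r -> good w ->
  (forall M, dom M -> on_sphere n r M /\ 0 <= a - sumabs (lst M n) /\
      (0 < a - sumabs (lst M n) \/ continuity_pt w 0)) ->
  (forall M, in_E n r M -> dom M) ->
  forall M, ((dom M /\ forall N, dom N -> Sg w a (lst M n) <= Sg w a (lst N n)) <-> in_E n r M).
Proof.
  intros Hn Hr Hg Hdom HE.
  assert (LB : forall N, dom N -> Sg w a (r :: repeat 0 (n - 1)) <= Sg w a (lst N n) /\
      ((1 < nz (lst N n))%nat -> Sg w a (r :: repeat 0 (n - 1)) < Sg w a (lst N n))).
  { intros N HN. destruct (Hdom N HN) as [Hs [H1 H2]].
    destruct n as [|m]; [lia|].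
    assert (Hr2 : sqrt (sumsq (lst N (Datatypes.S m))) = r).
    { rewrite lst_sumsq. unfold on_sphere in Hs. rewrite Hs. apply sqrt_pow2; lra. }
    simpl lst in *. rewrite <- Hr2. replace (Datatypes.S m - 1)%nat with (length (lst N m)) by (rewrite lst_length; lia).
    apply minE; auto. }
  intros M; split.
  - intros [HM Hmin].
    pose proof (HE _ (e0_E n r Hn)) as H0.
    pose proof (Hmin _ H0) as Hle.
    rewrite (proj2 (proj2 (E_props n r _ Hr (e0_E n r Hn)))) in Hle.
    destruct (LB M HM) as [_ L2].
    apply nz_E; auto. apply (Hdom M HM).
    destruct (Nat.lt_ge_cases 1 (nz (lst M n))) as [Hlt|]; auto.
    specialize (L2 Hlt); lra.
  - intros HME. split; auto. intros N HN.
    rewrite (proj2 (proj2 (E_props n r M Hr HME))). apply (LB N HN).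
Qed.

Lemma GenMaxD n r a (w : R -> R) (dom : (nat -> R) -> Prop) :
  (1 <= n)%nat -> 0 < r -> good w ->
  (forall M, dom M -> on_sphere n r M) ->
  (forall M, in_D n r M -> dom M) ->
  0 <= a - r * sqrt (INR n) -> (0 < a - r * sqrt (INR n) \/ continuity_pt w 0) ->
  forall M, ((dom M /\ forall N, dom N -> Sg w a (lst N n) <= Sg w a (lst M n)) <-> in_D n r M).
Proof.
  intros Hn Hr Hg Hdom HD Ha1 Ha2.
  assert (HnR : 0 < INR n) by (apply lt_0_INR; lia).
  pose proof (sqrt_lt_R0 _ HnR) as Hsq.
  pose proof (pow2_sqrt _ (pos_INR n)) as Hsq2.
  set (tau := r / sqrt (INR n)).
  assert (Htau : 0 <= tau) by (unfold tau; apply Rlt_le, Rdiv_lt_0_compat; auto).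
  assert (Hnt : INR n * tau = r * sqrt (INR n)).
  { unfold tau. rewrite <- Hsq2 at 1. field. lra. }
  assert (Hnt2 : INR n * tau ^ 2 = r ^ 2).
  { unfold tau. rewrite <- Hsq2 at 1. field. lra. }
  assert (Din : forall M, in_D n r M <-> List.Forall (fun x => Rabs x = tau) (lst M n)).
  { intros M. rewrite Forall_lst. unfold in_D. split; intros H j Hj.
    - destruct (H j Hj) as [E|E]; rewrite E; fold tau. apply Rabs_pos_eq; auto. rewrite Rabs_Ropp; apply Rabs_pos_eq; auto.
    - specialize (H j Hj). fold tau. unfold Rabs in H. destruct (Rcase_abs (M j)); [right|left]; lra. }
  assert (UB : forall N, dom N -> Sg w a (lst N n) <= Sg w a (repeat tau n) /\
      (~ List.Forall (fun x => Rabs x = tau) (lst N n) -> Sg w a (lst N n) < Sg w a (repeat tau n))).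
  { intros N HN. apply maxD; auto. apply lst_length.
    rewrite lst_sumsq. pose proof (Hdom N HN) as Hs. unfold on_sphere in Hs. rewrite Hs. lra.
    rewrite Hnt; auto. rewrite Hnt; auto. }
  assert (DV : forall M, in_D n r M -> Sg w a (lst M n) = Sg w a (repeat tau n)).
  { intros M HM. apply Din in HM. rewrite (Sg_forall_abs w a tau _ HM). rewrite lst_length; auto. }
  intros M; split.
  - intros [HM Hmax].
    set (D0 := fun _ : nat => tau).
    assert (HD0 : in_D n r D0). { unfold in_D, D0, tau; intros; left; auto. }
    pose proof (Hmax _ (HD _ HD0)) as Hle. rewrite (DV _ HD0) in Hle.
    apply Din. apply NNPP. intro Hf. destruct (UB M HM) as [_ U2]. specialize (U2 Hf). lra.
  - intros HMD. split; auto. intros N HN. rewrite (DV M HMD). apply (UB N HN).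
Qed.


Lemma Hn_sph n r h lam M : on_sphere n r M ->
  Hn n h lam M = Sg (fun t => rpow t (lam / 2)) (r ^ 2 + INR n / 4 + h) (lst M n).
Proof. intros H. rewrite Hn_bridge. unfold on_sphere in H. rewrite H. auto. Qed.

Lemma dom_iff n r h lam M : Hdom n r h lam M <->
  on_sphere n r M /\ (0 <= lam \/ 0 < r ^ 2 + INR n / 4 + h - sumabs (lst M n)).
Proof.
  unfold Hdom. split; intros [Hs H]; split; auto; destruct H as [H|H]; auto; right.
  - apply dom_pos_iff in H. unfold on_sphere in Hs. rewrite Hs in H. auto.
  - apply dom_pos_iff. unfold on_sphere in Hs. rewrite Hs. auto.
Qed.

Lemma D_sphere n r M : (1 <= n)%nat -> 0 < r -> in_D n r M -> on_sphere n r M.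
Proof.
  intros Hn Hr HD. unfold on_sphere.
  assert (HnR : 0 < INR n) by (apply lt_0_INR; lia).
  pose proof (sqrt_lt_R0 _ HnR) as Hsq.
  pose proof (pow2_sqrt _ (pos_INR n)) as Hsq2.
  rewrite (rsum_ext n _ (fun _ => (r / sqrt (INR n)) ^ 2)).
  - rewrite rsum_const. rewrite <- Hsq2 at 1. field. lra.
  - intros j Hj. destruct (HD j Hj) as [E|E]; rewrite E; ring.
Qed.

Lemma Sg_dom_conv n r h lam s M :
  on_sphere n r M -> Sg (fun t => s * rpow t (lam / 2)) (r ^ 2 + INR n / 4 + h) (lst M n) = s * Hn n h lam M.
Proof. intros H. rewrite Sg_scal, Hn_sph with (r := r); auto. Qed.

Lemma PosCase n r h lam s : (2 <= n)%nat -> 0 < r -> 0 <= h -> 0 < lam ->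
  0 < s * ((lam / 2) * (lam / 2 - 1) * (lam / 2 - 2) * (lam / 2 - 3)) ->
  (forall M, (Hdom n r h lam M /\ forall N, Hdom n r h lam N -> s * Hn n h lam M <= s * Hn n h lam N) <-> in_E n r M) /\
  (forall M, (Hdom n r h lam M /\ forall N, Hdom n r h lam N -> s * Hn n h lam N <= s * Hn n h lam M) <-> in_D n r M).
Proof.
  intros Hn2 Hr Hh Hl Hs.
  set (a := r ^ 2 + INR n / 4 + h).
  set (w := fun t => s * rpow t (lam / 2)).
  assert (Hg : good w) by (apply good_pow; auto).
  assert (Hc : continuity_pt w 0) by (apply cont0_pow; lra).
  assert (Hab : 0 <= a - r * sqrt (INR n)) by (unfold a; rewrite aa_bound; auto; pose proof (pow2_ge_0 (r - sqrt (INR n) / 2)); lra).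
  assert (Hd : forall M, Hdom n r h lam M <-> on_sphere n r M).
  { intros M; rewrite dom_iff; split; [intros [? ?]; auto | intros; split; auto; left; lra]. }
  assert (Conv : forall M, Hdom n r h lam M -> Sg w a (lst M n) = s * Hn n h lam M).
  { intros M HM. apply (Sg_dom_conv n r). exact (proj1 (Hd M) HM). }
  assert (C1 : forall M0, Hdom n r h lam M0 -> on_sphere n r M0 /\ 0 <= a - sumabs (lst M0 n) /\
      (0 < a - sumabs (lst M0 n) \/ continuity_pt w 0)).
  { intros M0 HM0. apply (proj1 (Hd M0)) in HM0. split; auto.
    pose proof (sphere_sumabs n r M0 Hr HM0). split; [lra | right; auto]. }
  assert (C2 : forall M0, in_E n r M0 -> Hdom n r h lam M0).
  { intros M0 HM0. apply (proj2 (Hd M0)). apply (E_props n r M0 Hr HM0). }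
  assert (C3 : forall M0, Hdom n r h lam M0 -> on_sphere n r M0) by (intros M0 HM0; apply (proj1 (Hd M0)); auto).
  assert (C4 : forall M0, in_D n r M0 -> Hdom n r h lam M0).
  { intros M0 HM0. apply (proj2 (Hd M0)). apply D_sphere; auto; lia. }
  split.
  - intros M. rewrite <- (GenMinE n r a w (Hdom n r h lam) ltac:(lia) Hr Hg C1 C2).
    split; intros [HM HH]; split; auto; intros N HN; specialize (HH N HN); rewrite ?Conv in *; auto.
  - intros M. rewrite <- (GenMaxD n r a w (Hdom n r h lam) ltac:(lia) Hr Hg C3 C4 Hab (or_intror Hc)).
    split; intros [HM HH]; split; auto; intros N HN; specialize (HH N HN); rewrite ?Conv in *; auto.
Qed.

Lemma NegCase n r h lam : (2 <= n)%nat -> 0 < r -> 0 <= h -> lam < 0 ->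
  (forall M, is_min_at n r h lam M <-> in_E n r M) /\
  (~ (h = 0 /\ r = sqrt (INR n) / 2) -> forall M, is_max_at n r h lam M <-> in_D n r M).
Proof.
  intros Hn2 Hr Hh Hl.
  set (a := r ^ 2 + INR n / 4 + h).
  set (w := fun t => 1 * rpow t (lam / 2)).
  assert (Hg : good w).
  { apply good_pow. set (k := lam / 2). assert (k < 0) by (unfold k; lra).
    assert (0 < k * (k - 1)) by nra. assert (0 < (k - 2) * (k - 3)) by nra.
    replace (1 * (k * (k - 1) * (k - 2) * (k - 3))) with ((k * (k - 1)) * ((k - 2) * (k - 3))) by ring.
    apply Rmult_lt_0_compat; auto. }
  assert (Hd : forall M, Hdom n r h lam M <-> on_sphere n r M /\ 0 < a - sumabs (lst M n)).
  { intros M; rewrite dom_iff; split; intros [H1 H2]; split; auto. destruct H2; auto; lra. }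
  assert (Conv : forall M, Hdom n r h lam M -> Sg w a (lst M n) = 1 * Hn n h lam M).
  { intros M HM. apply (Sg_dom_conv n r). exact (proj1 (proj1 (Hd M) HM)). }
  assert (C1 : forall M0, Hdom n r h lam M0 -> on_sphere n r M0 /\ 0 <= a - sumabs (lst M0 n) /\
      (0 < a - sumabs (lst M0 n) \/ continuity_pt w 0)).
  { intros M0 HM0. apply (proj1 (Hd M0)) in HM0. destruct HM0; split; auto. split; [lra | left; auto]. }
  assert (C2 : forall M0, in_E n r M0 -> Hdom n r h lam M0).
  { intros M0 HM0. apply (proj2 (Hd M0)). destruct (E_props n r M0 Hr HM0) as [H1 [H2 _]]. split; auto.
    rewrite H2. unfold a. assert (2 <= INR n) by (replace 2 with (INR 2) by (simpl; ring); apply le_INR; auto).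
    nra. }
  split.
  - intros M. unfold is_min_at. rewrite <- (GenMinE n r a w (Hdom n r h lam) ltac:(lia) Hr Hg C1 C2).
    split; intros [HM HH]; split; auto; intros N HN; specialize (HH N HN); rewrite ?Conv in * by auto; lra.
  - intros Hnd M. unfold is_max_at.
    assert (Hab : 0 < a - r * sqrt (INR n)).
    { unfold a; rewrite aa_bound; auto.
      destruct (Req_dec h 0) as [Eh|Eh].
      - assert (r <> sqrt (INR n) / 2) by (intro; apply Hnd; auto).
        assert (0 < (r - sqrt (INR n) / 2) ^ 2). { apply pow2_gt_0. lra. } lra.
      - pose proof (pow2_ge_0 (r - sqrt (INR n) / 2)). lra. }
    assert (C3 : forall M0, Hdom n r h lam M0 -> on_sphere n r M0) by (intros M0 HM0; apply (proj1 (Hd M0)); auto).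
    assert (C4 : forall M0, in_D n r M0 -> Hdom n r h lam M0).
    { intros M0 HM0. apply (proj2 (Hd M0)). pose proof (D_sphere n r M0 ltac:(lia) Hr HM0). split; auto.
      pose proof (sphere_sumabs n r M0 Hr H). lra. }
    rewrite <- (GenMaxD n r a w (Hdom n r h lam) ltac:(lia) Hr Hg C3 C4 ltac:(lra) (or_introl Hab)).
    split; intros [HM HH]; split; auto; intros N HN; specialize (HH N HN); rewrite ?Conv in * by auto; lra.
Qed.


Lemma Sg_c0 c l : Sg (fun _ => 1) c l = 2 ^ length l.
Proof. revert c; induction l; intros c; simpl; auto. rewrite !IHl; ring. Qed.
Lemma Sg_c1 c l : Sg (fun t => t) c l = 2 ^ length l * c.
Proof. revert c; induction l; intros c; simpl; try ring. rewrite !IHl; ring. Qed.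
Lemma Sg_c2 c l : Sg (fun t => t ^ 2) c l = 2 ^ length l * (c ^ 2 + sumsq l).
Proof. revert c; induction l; intros c; simpl; try ring. rewrite !IHl; ring. Qed.
Lemma Sg_c3 c l : Sg (fun t => t ^ 3) c l = 2 ^ length l * (c ^ 3 + 3 * c * sumsq l).
Proof. revert c; induction l; intros c; simpl; try ring. rewrite !IHl; ring. Qed.

Lemma rpow_nat t m : 0 <= t -> (0 < m)%nat -> rpow t (INR m) = t ^ m.
Proof.
  intros Ht Hm. destruct (Rlt_dec 0 t) as [Hp|Hp].
  - rewrite rpow_pos_eq by auto. apply Rpower_pow; auto.
  - assert (t = 0) by lra. subst. unfold rpow. destruct (Rlt_dec 0 0); [lra|].
    destruct (Rlt_dec 0 (INR m)). destruct m; [lia|]. simpl; ring. exfalso; apply n0; apply lt_0_INR; auto.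
Qed.

Lemma Const n r h lam : (2 <= n)%nat -> 0 < r -> 0 <= h -> (lam = 0 \/ lam = 2 \/ lam = 4 \/ lam = 6) ->
  forall M N, Hdom n r h lam M -> Hdom n r h lam N -> Hn n h lam M = Hn n h lam N.
Proof.
  intros Hn2 Hr Hh Hlam.
  set (a := r ^ 2 + INR n / 4 + h).
  assert (Key : forall P : R -> R, (forall t, 0 <= t -> rpow t (lam / 2) = P t) ->
     (forall l l', length l = length l' -> sumsq l = sumsq l' -> Sg P a l = Sg P a l') ->
     forall M N, Hdom n r h lam M -> Hdom n r h lam N -> Hn n h lam M = Hn n h lam N).
  { intros P HP HS M N HM HN. apply dom_iff in HM. apply dom_iff in HN.
    destruct HM as [HM _]; destruct HN as [HN _].
    rewrite (Hn_sph n r h lam M HM), (Hn_sph n r h lam N HN). fold a.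
    assert (Hab : 0 <= a - r * sqrt (INR n)) by (unfold a; rewrite aa_bound; auto; pose proof (pow2_ge_0 (r - sqrt (INR n) / 2)); lra).
    rewrite (S_eq_on _ P a (lst M n)), (S_eq_on _ P a (lst N n)).
    - apply HS. rewrite !lst_length; auto. rewrite !lst_sumsq. unfold on_sphere in *. rewrite HM, HN; auto.
    - intros t Ht. apply HP. pose proof (sphere_sumabs n r N Hr HN). lra.
    - intros t Ht. apply HP. pose proof (sphere_sumabs n r M Hr HM). lra. }
  destruct Hlam as [E|[E|[E|E]]]; subst lam.
  - apply (Key (fun _ => 1)).
    + intros t _. replace (0 / 2) with 0 by field. unfold rpow. destruct (Rlt_dec 0 t).
      apply Rpower_O; auto. destruct (Rlt_dec 0 0); lra.
    + intros l l' H1 H2. rewrite !Sg_c0, H1; auto.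
  - apply (Key (fun t => t)).
    + intros t Ht. replace (2 / 2) with (INR 1) by (simpl; field). rewrite rpow_nat; auto; ring.
    + intros l l' H1 H2. rewrite !Sg_c1, H1; auto.
  - apply (Key (fun t => t ^ 2)).
    + intros t Ht. replace (4 / 2) with (INR 2) by (simpl; field). rewrite rpow_nat; auto.
    + intros l l' H1 H2. rewrite !Sg_c2, H1, H2; auto.
  - apply (Key (fun t => t ^ 3)).
    + intros t Ht. replace (6 / 2) with (INR 3) by (simpl; field). rewrite rpow_nat; auto.
    + intros l l' H1 H2. rewrite !Sg_c3, H1, H2; auto.
Qed.


Lemma rsum_split2 n F : (2 <= n)%nat -> rsum n F = F 0%nat + F 1%nat + rsum (n - 2) (fun i => F (2 + i)%nat).
Proof.
  intros H. replace n with (2 + (n - 2))%nat at 1 by lia. rewrite rsum_add_range. simpl. ring.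
Qed.

Definition Pp (r : R) (j : nat) : R := if Nat.eqb j 0 then 3 * r / 5 else if Nat.eqb j 1 then 4 * r / 5 else 0.

Lemma Pp_props n r h lam : (2 <= n)%nat -> 0 < r -> 0 <= h -> Hdom n r h lam (Pp r) /\ ~ in_E n r (Pp r).
Proof.
  intros Hn2 Hr Hh.
  assert (Hs : on_sphere n r (Pp r)).
  { unfold on_sphere. rewrite rsum_split2 by auto. rewrite (rsum_ext _ _ (fun _ => 0)).
    rewrite rsum_const. unfold Pp; simpl. field. intros j _. unfold Pp. simpl. ring. }
  assert (Ha : sumabs (lst (Pp r) n) = 7 * r / 5).
  { rewrite lst_sumabs. rewrite rsum_split2 by auto. rewrite (rsum_ext _ _ (fun _ => 0)).
    rewrite rsum_const. unfold Pp; simpl. rewrite !Rabs_pos_eq by lra. field.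
    intros j _. unfold Pp. simpl. apply Rabs_R0. }
  split.
  - apply dom_iff. split; auto. right. rewrite Ha.
    assert (2 <= INR n) by (replace 2 with (INR 2) by (simpl; ring); apply le_INR; auto).
    pose proof (pow2_ge_0 (r - 7/10)). lra.
  - intros [i [Hi [s [_ HM]]]].
    pose proof (HM 0%nat ltac:(lia)) as H0. pose proof (HM 1%nat ltac:(lia)) as H1.
    assert (E0 : Pp r 0 = 3 * r / 5) by reflexivity. assert (E1 : Pp r 1 = 4 * r / 5) by reflexivity.
    rewrite E0 in H0; rewrite E1 in H1.
    destruct (Nat.eqb_spec 0 i); destruct (Nat.eqb_spec 1 i); try lia; lra.
Qed.

Lemma e0_dom n r h lam : (2 <= n)%nat -> 0 < r -> 0 <= h -> Hdom n r h lam (fun j => if Nat.eqb j 0 then r else 0).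
Proof.
  intros Hn2 Hr Hh. destruct (E_props n r _ Hr (e0_E n r ltac:(lia))) as [H1 [H2 _]].
  apply dom_iff. split; auto. right. rewrite H2.
  assert (2 <= INR n) by (replace 2 with (INR 2) by (simpl; ring); apply le_INR; auto).
  pose proof (pow2_ge_0 (r - 1/2)). lra.
Qed.

Lemma noconst n r h lam (V : (nat -> R) -> R) : (2 <= n)%nat -> 0 < r -> 0 <= h ->
  (forall M, (Hdom n r h lam M /\ forall N, Hdom n r h lam N -> V M <= V N) <-> in_E n r M) ->
  V (Pp r) = V (fun j => if Nat.eqb j 0 then r else 0) -> False.
Proof.
  intros Hn2 Hr Hh Hchar HV.
  destruct (Pp_props n r h lam Hn2 Hr Hh) as [HP HnE].
  apply HnE. apply Hchar. split; auto. intros N HN.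
  rewrite HV. apply (proj2 (Hchar _) (e0_E n r ltac:(lia))). auto.
Qed.

Lemma Unbounded n r lam : (2 <= n)%nat -> r = sqrt (INR n) / 2 -> lam < 0 ->
  forall B, exists M, Hdom n r 0 lam M /\ B < Hn n 0 lam M.
Proof.
  intros Hn2 Hr Hl B.
  set (k := lam / 2). assert (Hk : k < 0) by (unfold k; lra).
  set (T := (Rabs B + 1) / (- k) + 2).
  assert (HT : 2 <= T). { unfold T. assert (0 <= (Rabs B + 1) / - k) by (apply Rlt_le, Rdiv_lt_0_compat; pose proof (Rabs_pos B); lra). lra. }
  set (d := exp (- T)).
  assert (Hd0 : 0 < d) by apply exp_pos.
  assert (Hd1 : d < 1/4).
  { unfold d. assert (exp (-T) <= exp (-2)) by (destruct (Rle_lt_or_eq_dec 2 T HT) as [H|H]; [left; apply exp_increasing; lra | right; rewrite <- H; reflexivity]).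
    assert (Hexp2 : 4 < exp 2).
    { replace 2 with (1 + 1) by ring. rewrite exp_plus. pose proof (exp_ineq1 1 ltac:(lra)). nra. }
    assert (exp (-2) = / exp 2) by (rewrite <- exp_Ropp; auto).
    assert (/ exp 2 < / 4) by (apply Rinv_lt_contravar; lra). lra. }
  set (q := sqrt (1 - (1 - d) ^ 2)).
  assert (Hq0 : 0 <= 1 - (1 - d) ^ 2) by nra.
  assert (Hq2 : q ^ 2 = 1 - (1 - d) ^ 2) by (apply pow2_sqrt; auto).
  assert (Hqp : 0 <= q) by apply sqrt_pos.
  assert (Hqle : q <= 1 - d).
  { destruct (Rle_dec q (1 - d)); auto. assert ((1-d)^2 < q^2) by nra. nra. }
  set (cc := ((1 - d) + q) / 2). set (ss := ((1 - d) - q) / 2).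
  set (Mu := fun j : nat => if Nat.eqb j 0 then cc else if Nat.eqb j 1 then ss else 1 / 2).
  assert (HnR : INR (n - 2) = INR n - 2) by (rewrite minus_INR by auto; simpl; ring).
  pose proof (pow2_sqrt (INR n) (pos_INR n)) as Hsq.
  assert (Hs : on_sphere n r Mu).
  { unfold on_sphere. rewrite rsum_split2 by auto. rewrite (rsum_ext _ _ (fun _ => (1/2)^2)).
    - rewrite rsum_const, HnR. unfold Mu; simpl. rewrite Hr.
      unfold cc, ss. replace (sqrt (INR n) / 2) with (sqrt (INR n) * / 2) by field.
      assert (sqrt (INR n) * sqrt (INR n) = INR n) by (apply sqrt_sqrt, pos_INR). assert (q * q = 1 - (1 - d) ^ 2) by (rewrite <- Hq2; ring). nra.
    - intros j _. unfold Mu. simpl. reflexivity. }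
  assert (Ha : sumabs (lst Mu n) = 1 - d + (INR n - 2) / 2).
  { rewrite lst_sumabs, rsum_split2 by auto. rewrite (rsum_ext _ _ (fun _ => 1/2)).
    - rewrite rsum_const, HnR. unfold Mu; simpl. unfold cc, ss. rewrite !Rabs_pos_eq by lra. field.
    - intros j _. unfold Mu. simpl. apply Rabs_pos_eq; lra. }
  assert (Hr2 : r ^ 2 = INR n / 4) by (rewrite Hr; replace (sqrt (INR n) / 2) with (sqrt (INR n) * / 2) by field;
     rewrite Rpow_mult_distr, Hsq; field).
  exists Mu. split.
  - apply dom_iff. split; auto. right. rewrite Ha, Hr2. lra.
  - rewrite (Hn_sph n r 0 lam Mu Hs).
    eapply Rlt_le_trans; [|apply S_ge_min; intros; apply rpow_nonneg].
    rewrite Ha, Hr2. replace (INR n / 4 + INR n / 4 + 0 - (1 - d + (INR n - 2) / 2)) with d by field.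
    fold k. rewrite rpow_pos_eq by auto. unfold Rpower, d. rewrite ln_exp.
    replace (k * - T) with (Rabs B + 1 + (- 2 * k)) by (unfold T; field; lra).
    pose proof (exp_ineq1 (Rabs B + 1 + - 2 * k) ltac:(pose proof (Rabs_pos B); lra)).
    pose proof (Rle_abs B). lra.
Qed.


Lemma conv_min1 n r h lam (P : (nat -> R) -> Prop) :
  (forall M, (Hdom n r h lam M /\ forall N, Hdom n r h lam N -> 1 * Hn n h lam M <= 1 * Hn n h lam N) <-> P M) ->
  forall M, is_min_at n r h lam M <-> P M.
Proof. intros H M. rewrite <- H. unfold is_min_at. split; intros [A B]; split; auto; intros N HN; specialize (B N HN); lra. Qed.
Lemma conv_max1 n r h lam (P : (nat -> R) -> Prop) :
  (forall M, (Hdom n r h lam M /\ forall N, Hdom n r h lam N -> 1 * Hn n h lam N <= 1 * Hn n h lam M) <-> P M) ->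
  forall M, is_max_at n r h lam M <-> P M.
Proof. intros H M. rewrite <- H. unfold is_max_at. split; intros [A B]; split; auto; intros N HN; specialize (B N HN); lra. Qed.
Lemma conv_maxm n r h lam (P : (nat -> R) -> Prop) :
  (forall M, (Hdom n r h lam M /\ forall N, Hdom n r h lam N -> -1 * Hn n h lam M <= -1 * Hn n h lam N) <-> P M) ->
  forall M, is_max_at n r h lam M <-> P M.
Proof. intros H M. rewrite <- H. unfold is_max_at. split; intros [A B]; split; auto; intros N HN; specialize (B N HN); lra. Qed.
Lemma conv_minm n r h lam (P : (nat -> R) -> Prop) :
  (forall M, (Hdom n r h lam M /\ forall N, Hdom n r h lam N -> -1 * Hn n h lam N <= -1 * Hn n h lam M) <-> P M) ->
  forall M, is_min_at n r h lam M <-> P M.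
Proof. intros H M. rewrite <- H. unfold is_min_at. split; intros [A B]; split; auto; intros N HN; specialize (B N HN); lra. Qed.

Lemma sig_A lam : (0 < lam < 2 \/ 4 < lam < 6) -> 0 < -1 * ((lam / 2) * (lam / 2 - 1) * (lam / 2 - 2) * (lam / 2 - 3)).
Proof.
  intros H. set (k := lam / 2).
  replace (-1 * (k * (k - 1) * (k - 2) * (k - 3))) with (- ((k * (k - 1)) * ((k - 2) * (k - 3)))) by ring.
  destruct H as [H|H].
  - assert (k * (k - 1) < 0) by (unfold k; nra). assert (0 < (k - 2) * (k - 3)) by (unfold k; nra). nra.
  - assert (0 < k * (k - 1)) by (unfold k; nra). assert ((k - 2) * (k - 3) < 0) by (unfold k; nra). nra.
Qed.

Lemma sig_B lam : (2 < lam < 4 \/ 6 < lam) -> 0 < 1 * ((lam / 2) * (lam / 2 - 1) * (lam / 2 - 2) * (lam / 2 - 3)).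
Proof.
  intros H. set (k := lam / 2).
  replace (1 * (k * (k - 1) * (k - 2) * (k - 3))) with ((k * (k - 1)) * ((k - 2) * (k - 3))) by ring.
  destruct H as [H|H].
  - assert (0 < k * (k - 1)) by (unfold k; nra). assert (0 < (k - 2) * (k - 3)) by (unfold k; nra). nra.
  - assert (0 < k * (k - 1)) by (unfold k; nra). assert (0 < (k - 2) * (k - 3)) by (unfold k; nra). nra.
Qed.

Theorem theorem6p3 (n : nat) (r h : R) (Hn2 : (2 <= n)%nat) (Hr : 0 < r) (Hh : 0 <= h) :
  (* (1) lambda < 0 *)
  (forall lam, lam < 0 ->
     (forall M, is_min_at n r h lam M <-> in_E n r M) /\
     (h = 0 /\ r = sqrt (INR n) / 2 ->
        forall B, exists M, Hdom n r h lam M /\ B < Hn n h lam M) /\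
     (~ (h = 0 /\ r = sqrt (INR n) / 2) ->
        forall M, is_max_at n r h lam M <-> in_D n r M)) /\
  (* (2) *)
  (forall lam,
     ((lam = 0 \/ lam = 2 \/ lam = 4 \/ lam = 6) <->
      (forall M N, Hdom n r h lam M -> Hdom n r h lam N -> Hn n h lam M = Hn n h lam N)) /\
     ((0 < lam < 2 \/ 4 < lam < 6) ->
        (forall M, is_max_at n r h lam M <-> in_E n r M) /\
        (forall M, is_min_at n r h lam M <-> in_D n r M)) /\
     (2 < lam < 4 ->
        (forall M, is_min_at n r h lam M <-> in_E n r M) /\
        (forall M, is_max_at n r h lam M <-> in_D n r M))) /\
  (* (3) lambda > 6 *)
  (forall lam, 6 < lam ->
     (forall M, is_max_at n r h lam M <-> in_D n r M) /\
     (forall M, is_min_at n r h lam M <-> in_E n r M)).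
Proof.
  assert (PA : forall lam, (0 < lam < 2 \/ 4 < lam < 6) ->
        (forall M, is_max_at n r h lam M <-> in_E n r M) /\
        (forall M, is_min_at n r h lam M <-> in_D n r M)).
  { intros lam Hl. assert (0 < lam) by lra.
    destruct (PosCase n r h lam (-1) Hn2 Hr Hh H (sig_A lam Hl)) as [A B].
    split; [apply conv_maxm | apply conv_minm]; auto. }
  assert (PB : forall lam, (2 < lam < 4 \/ 6 < lam) ->
        (forall M, is_min_at n r h lam M <-> in_E n r M) /\
        (forall M, is_max_at n r h lam M <-> in_D n r M)).
  { intros lam Hl. assert (0 < lam) by lra.
    destruct (PosCase n r h lam 1 Hn2 Hr Hh H (sig_B lam Hl)) as [A B].
    split; [apply conv_min1 | apply conv_max1]; auto. }
  split; [|split].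
  - intros lam Hl. destruct (NegCase n r h lam Hn2 Hr Hh Hl) as [A B].
    split; [|split]; auto.
    intros [E1 E2]. subst h. apply Unbounded; auto.
  - intros lam. split; [split|split].
    + intros Hl. apply Const; auto.
    + intros Hc. apply NNPP. intros Hno.
      set (e0 := fun j : nat => if Nat.eqb j 0 then r else 0).
      assert (HV : Hn n h lam (Pp r) = Hn n h lam e0).
      { apply Hc. apply (Pp_props n r h lam Hn2 Hr Hh). apply e0_dom; auto. }
      destruct (Rlt_le_dec lam 0) as [L0|L0].
      { destruct (NegCase n r h lam Hn2 Hr Hh L0) as [A _].
        apply (noconst n r h lam (fun M => Hn n h lam M) Hn2 Hr Hh); auto. }
      assert (Hcase : (0 < lam < 2 \/ 4 < lam < 6) \/ (2 < lam < 4 \/ 6 < lam)).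
      { destruct (Req_dec lam 0); [exfalso; apply Hno; auto|].
        destruct (Req_dec lam 2); [exfalso; apply Hno; auto|].
        destruct (Req_dec lam 4); [exfalso; apply Hno; auto|].
        destruct (Req_dec lam 6); [exfalso; apply Hno; auto|].
        destruct (Rlt_le_dec lam 2); [left; left; lra|].
        destruct (Rlt_le_dec lam 4); [right; left; lra|].
        destruct (Rlt_le_dec lam 6); [left; right; lra|]. right; right; lra. }
      destruct Hcase as [Hc1|Hc2].
      * assert (0 < lam) by lra.
        destruct (PosCase n r h lam (-1) Hn2 Hr Hh H (sig_A lam Hc1)) as [A _].
        apply (noconst n r h lam (fun M => -1 * Hn n h lam M) Hn2 Hr Hh); auto. simpl. rewrite HV; auto.
      * assert (0 < lam) by lra.
        destruct (PosCase n r h lam 1 Hn2 Hr Hh H (sig_B lam Hc2)) as [A _].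
        apply (noconst n r h lam (fun M => 1 * Hn n h lam M) Hn2 Hr Hh); auto. simpl. rewrite HV; auto.
    + apply PA.
    + intros Hl. apply PB. left; auto.
  - intros lam Hl. destruct (PB lam (or_intror Hl)) as [A B]. split; auto.
Qed.
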